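(* Let $\mathbb{F}_q$ be a finite field of odd characteristic $p$ with $q = p^n$. If $n$ is even, then equilateral triangles of nonzero sidelength exist in the plane $\mathbb{F}_q^2$. If $n$ is odd, they exist if and only if $p \equiv 1, 3$ or $11 \pmod{12}$.
   Context: For $u,v \in \mathbb{F}_q^2$, $\|u-v\| = (u_1-v_1)^2+(u_2-v_2)^2$. An equilateral triangle of sidelength $\ell$ is a triple $(x_1,x_2,x_3)$ of points of $\mathbb{F}_q^2$ with $\|x_1-x_2\| = \|x_2-x_3\| = \|x_3-x_1\| = \ell$. *)

(* Defs.v *)
From HB Require Import structures.
From mathcomp Require Import all_boot all_order all_algebra all_field.
Set Implicit Arguments. Unset Strict Implicit. Unset Printing Implicit Defensive.
Import GRing.Theory.
Local Open Scope ring_scope.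

Definition qnorm (F : fieldType) (u v : F * F) : F :=
  (u.1 - v.1) ^+ 2 + (u.2 - v.2) ^+ 2.

Definition equilateral (F : fieldType) (x1 x2 x3 : F * F) (l : F) : Prop :=
  [/\ qnorm x1 x2 = l, qnorm x2 x3 = l & qnorm x3 x1 = l].

Definition has_nz_equilateral (F : fieldType) : Prop :=
  exists (x1 x2 x3 : F * F) (l : F), l != 0 /\ equilateral x1 x2 x3 l.

(* Main.v *)
Require Import Defs.
From HB Require Import structures.
From mathcomp Require Import all_boot all_order all_algebra all_field.
From mathcomp Require Import cyclic zify ring lra.
Set Implicit Arguments. Unset Strict Implicit. Unset Printing Implicit Defensive.
Import GRing.Theory.

Section Aux.
Local Open Scope ring_scope.
Definition issq (F : fieldType) (x : F) := exists y : F, y ^+ 2 = x.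
Section FF.
Variable F : finFieldType.

Lemma card_gt1F : (1 < #|F|)%N.
Proof. apply/card_gt1P; exists 0 => //; exists 1 => //; by rewrite eq_sym oner_neq0. Qed.

Lemma nz_unity (x : F) : x != 0 -> x ^+ #|F|.-1 = 1.
Proof.
move=> hx; have := expf_card x.
have h := card_gt1F; rewrite -{1}(prednK (ltnW h)) exprS => e.
apply: (mulfI hx); by rewrite mulr1.
Qed.

Lemma prim_ex : exists z : F, (#|F|.-1).-primitive_root z.
Proof.
pose rs := enum (predC1 (0:F)).
have: has (#|F|.-1).-primitive_root rs.
  apply: has_prim_root.
  - by have := card_gt1F; case: #|F| => // [[]].
  - apply/allP => x; rewrite mem_enum /= => hx; by rewrite unity_rootE nz_unity.
  - exact: enum_uniq.
  - by rewrite -cardE cardC1.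
by case/hasP => z _ hz; exists z.
Qed.

Section Prim.
Variable z : F.
Hypothesis hz : (#|F|.-1).-primitive_root z.
Local Notation m := (#|F|.-1).
Hypothesis hm : ~~ odd m.

Lemma m_gt0 : (0 < m)%N.
Proof. by have := card_gt1F; case: #|F| => // [[]]. Qed.

Lemma z_neq0 : z != 0.
Proof.
apply/negP => /eqP e; have := prim_expr_order hz; rewrite e expr0n.
rewrite eqn0Ngt m_gt0 /= => /eqP; by rewrite eq_sym oner_eq0.
Qed.

Lemma pow_of (x : F) : x != 0 -> exists i, x = z ^+ i.
Proof. by move=> hx; have [i ->] := prim_rootP hz (nz_unity hx); exists i. Qed.

Lemma sq_pow j : issq (z ^+ j) <-> ~~ odd j.
Proof.
split.
- case=> y hy.
  have y0 : y != 0.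
    apply/negP => /eqP e; move: hy; rewrite e expr0n /= => /esym/eqP.
    by rewrite expf_eq0 (negPf z_neq0) andbF.
  have [i ei] := pow_of y0; move: hy; rewrite ei -exprM => /eqP.
  rewrite (eq_prim_root_expr hz) => /eqP e.
  rewrite -(@odd_mod j m (negPf hm)) -e (@odd_mod _ m (negPf hm)).
  by rewrite oddM andbF.
- move=> hj; exists (z ^+ j./2); rewrite -exprM muln2.
  by rewrite -{2}(odd_double_half j) (negPf hj) add0n.
Qed.

Lemma mul_sq (a b : F) : a != 0 -> b != 0 ->
  issq (a * b) <-> (issq a <-> issq b).
Proof.
move=> a0 b0; have [i ->] := pow_of a0; have [j ->] := pow_of b0.
rewrite -exprD !sq_pow oddD.
by case: (odd i); case: (odd j); split => //= -[] h1 h2; try (by apply: h1); by apply: h2.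
Qed.

Lemma mk : m = (m./2).*2.
Proof. by rewrite -{1}(odd_double_half m) (negPf hm) add0n. Qed.

Lemma half_prop : z ^+ m./2 = -1.
Proof.
set w := z ^+ m./2.
have hw2 : w ^+ 2 = 1.
  rewrite /w -exprM muln2 -mk; exact: prim_expr_order hz.
have hw1 : w != 1.
  rewrite /w -(prim_order_dvd hz); apply/negP => /dvdn_leq.
  have := m_gt0; rewrite mk -muln2; lia.
have : (w - 1) * (w + 1) = 0.
  by rewrite mulrDr mulr1 mulrBl mul1r -expr2 hw2; ring.
move/eqP; rewrite mulf_eq0 subr_eq0 (negPf hw1) /= addr_eq0 => /eqP //.
Qed.

Lemma m1 : issq (-1 : F) <-> (4 %| m)%N.
Proof.
rewrite -half_prop sq_pow {2}mk -muln2 -dvdn2.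
by rewrite (_ : 4 = 2 * 2)%N // dvdn_pmul2r.
Qed.
Lemma m3 : (2:F) != 0 -> (3:F) != 0 -> issq (-3 : F) <-> (3 %| m)%N.
Proof.
move=> h2 h3.
have h12 : (12:F) != 0.
  have -> : (12:F) = 2 * 2 * 3 by ring.
  by rewrite !mulf_neq0.
split.
- case=> s hs; set w := (s - 1) / 2.
  have H8 : (s - 1) ^+ 3 = 8.
    have -> : (s - 1) ^+ 3 = s * s ^+ 2 - 3 * s ^+ 2 + 3 * s - 1 by ring.
    rewrite hs; ring.
  have hw3 : w ^+ 3 = 1.
    rewrite /w expr_div_n H8; field; have -> : (8:F) = 2 * 2 * 2 by ring. by rewrite !mulf_neq0.
  have hw1 : w != 1.
    apply/negP => /eqP e.
    have es : s = 2 * w + 1 by rewrite /w; field; rewrite h2.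
    move: hs; rewrite es e => e2; move: h12.
    have -> : (12:F) = (2 * 1 + 1) ^+ 2 + 3 by ring.
    by rewrite e2 addNr eqxx.
  have hw0 : w != 0.
    by apply/negP => /eqP e; move: hw3; rewrite e expr0n /= => /eqP; rewrite eq_sym oner_eq0.
  move: (nz_unity hw0); rewrite {1}(divn_eq m 3) exprD mulnC exprM hw3 expr1n mul1r.
  rewrite /dvdn; have : (m %% 3 < 3)%N by rewrite ltn_mod.
  case: (m %% 3)%N => [|[|[|//]]] //= _.
  + by rewrite expr1 => e; rewrite e eqxx in hw1.
  + move=> e; move: hw3; rewrite exprS e mulr1 => e'; by rewrite e' eqxx in hw1.
- move=> d3; set w := z ^+ (m %/ 3).
  have hw3 : w ^+ 3 = 1 by rewrite /w -exprM divnK //; exact: prim_expr_order hz.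
  have hw1 : w != 1.
    rewrite /w -(prim_order_dvd hz); apply/negP => /dvdn_leq.
    have := m_gt0; lia.
  have hq : w ^+ 2 + w + 1 = 0.
    have : (w - 1) * (w ^+ 2 + w + 1) = 0.
      have -> : (w - 1) * (w ^+ 2 + w + 1) = w ^+ 3 - 1 by ring.
      by rewrite hw3 subrr.
    by move/eqP; rewrite mulf_eq0 subr_eq0 (negPf hw1) /= => /eqP.
  exists (2 * w + 1).
  have -> : (2 * w + 1) ^+ 2 = 4 * (w ^+ 2 + w + 1) - 3 by ring.
  by rewrite hq mulr0 sub0r.
Qed.
End Prim.
End FF.

Lemma geom (F : fieldType) : (2:F) != 0 -> (has_nz_equilateral F <-> issq (3:F)).
Proof.
move=> h2.
have h4 : (4:F) != 0 by rewrite (_ : (4:F) = 2*2) ?mulf_neq0 //; ring.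
split.
- case=> [[x11 x12]] [[x21 x22]] [[x31 x32]] [l [l0 [e1 e2 e3]]].
  move: e1 e2 e3; rewrite /qnorm /=.
  set a := x11 - x31; set b := x12 - x32; set c := x21 - x31; set d := x22 - x32.
  have -> : (x11 - x21) ^+ 2 + (x12 - x22) ^+ 2 = (a - c) ^+ 2 + (b - d) ^+ 2 by rewrite /a /b /c /d; ring.
  have -> : (x31 - x11) ^+ 2 + (x32 - x12) ^+ 2 = a ^+ 2 + b ^+ 2 by rewrite /a /b; ring.
  move=> e1 e2 e3.
  have k1 : 2 * (a * c + b * d) = l.
    have -> : 2 * (a * c + b * d) = (a ^+ 2 + b ^+ 2) + (c ^+ 2 + d ^+ 2) - ((a - c) ^+ 2 + (b - d) ^+ 2) by ring.
    rewrite e1 e2 e3; ring.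
  have k2 : 4 * (a * d - b * c) ^+ 2 = 3 * l ^+ 2.
    have -> : 4 * (a * d - b * c) ^+ 2 = 4 * (a ^+ 2 + b ^+ 2) * (c ^+ 2 + d ^+ 2) - (2 * (a * c + b * d)) ^+ 2 by ring.
    rewrite k1 e2 e3; ring.
  exists (2 * (a * d - b * c) / l).
  have -> : (2 * (a * d - b * c) / l) ^+ 2 = 4 * (a * d - b * c) ^+ 2 / l ^+ 2 by field; rewrite ?l0 //.
  rewrite k2; field; rewrite ?l0 //.
- case=> s hs; exists (1, 0), (0, 0), (1 / 2, s / 2), 1; split; first by rewrite oner_eq0.
  split; rewrite /qnorm /=.
  + ring.
  + have -> : (0 - 1 / 2) ^+ 2 + (0 - s / 2) ^+ 2 = (1 + s ^+ 2) / 4 :> F by field; rewrite ?h2 ?h4.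
    rewrite hs; field; rewrite ?h2 ?h4 //.
  + have -> : (1 / 2 - 1) ^+ 2 + (s / 2 - 0) ^+ 2 = (1 + s ^+ 2) / 4 :> F by field; rewrite ?h2 ?h4.
    rewrite hs; field; rewrite ?h2 ?h4 //.
Qed.

End Aux.

Lemma p12 p : prime p -> p != 2 -> p != 3 -> p %% 12 \in [:: 1; 5; 7; 11].
Proof.
move=> pp p2 p3.
have h2 : ~~ (2 %| p) by rewrite dvdn_prime2 // eq_sym.
have h3 : ~~ (3 %| p) by rewrite dvdn_prime2 // eq_sym.
have : p %% 12 < 12 by rewrite ltn_mod.
move: h2 h3; rewrite /dvdn.
have e2 : p %% 2 = (p %% 12) %% 2 by rewrite modn_dvdm.
have e3 : p %% 3 = (p %% 12) %% 3 by rewrite modn_dvdm.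
rewrite e2 e3; case: (p %% 12) => [|[|[|[|[|[|[|[|[|[|[|[|]]]]]]]]]]]] //.
Qed.

Lemma pn12 p n : p %% 12 \in [:: 1; 5; 7; 11] -> p ^ n %% 12 = if odd n then p %% 12 else 1.
Proof.
move=> hp; elim: n => [|n IH] //=; rewrite expnS -modnMm IH.
move: hp; case: (odd n) => /=; rewrite !inE => /or4P [] /eqP -> //.
Qed.

Lemma fin_ar q : 0 < q -> q %% 12 \in [:: 1; 5; 7; 11] ->
  ((4 %| q.-1) <-> (3 %| q.-1)) <-> q %% 12 \in [:: 1; 11].
Proof.
move=> q0; rewrite !inE => /or4P [] /eqP e.
all: split; [move=> H|move=> /orP [] /eqP ?].
all: try lia.
Qed.


Theorem corollary4p2 (F : finFieldType) (p n : nat) :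
  prime p -> p != 2 -> (p \in [pchar F])%R -> #|F| = p ^ n ->
  (~~ odd n -> has_nz_equilateral F) /\
  (odd n -> (has_nz_equilateral F <-> p %% 12 \in [:: 1; 3; 11])).
Proof.
move=> pp p2 pc card.
have h2F : (2:F)%R != 0%R.
  by rewrite -(dvdn_pcharf pc) dvdn_prime2.
case: (eqVneq p 3) => [e3|p3].
  subst p.
  have hz : has_nz_equilateral F.
    apply/(geom h2F); exists 0%R; rewrite expr2 mul0r; apply/esym/eqP.
    by rewrite -(dvdn_pcharf pc).
  by split => // _; split.
have h3F : (3:F)%R != 0%R.
  by rewrite -(dvdn_pcharf pc) dvdn_prime2.
have oddp : odd p.
  by apply/negP => /negP; rewrite -dvdn2 dvdn_prime2 // eq_sym (negPf p2).
have q0 : (0 < #|F|)%N by rewrite card expn_gt0 prime_gt0.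
have hm : ~~ odd #|F|.-1.
  have : odd #|F| by rewrite card oddX oddp orbT.
  by rewrite -(prednK q0) /=.
have [z hz] := prim_ex F.
have key : has_nz_equilateral F <-> ((4 %| #|F|.-1) <-> (3 %| #|F|.-1)).
  rewrite (geom h2F).
  have -> : (3:F)%R = (-1 * -3)%R by ring.
  rewrite (mul_sq hz hm) ?oppr_eq0 ?oner_eq0 // (m1 hz hm) (m3 hz hm) //.
have h12 := p12 pp p2 p3.
have hq := pn12 n h12.
rewrite -card in hq.
split.
- move=> /negPf en; rewrite en in hq; apply/key; lia.
- move=> on; rewrite on in hq; rewrite key.
  have := fin_ar q0; rewrite hq => H; rewrite H //.
  move: h12; rewrite !inE => /or4P [] /eqP -> //.
Qed.
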